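(* Let $V$ be a finite set, $\pi$ a probability distribution on $V$, $\mathcal{D}$ a finite set, and for all $x\in\mathcal{D}$ let $M_x\subseteq V$ with $\Pr_{v\sim\pi}[v\in M_x]=\varepsilon$ for a fixed $\varepsilon\in(0,1)$. Work in $\mathbb{C}^{\{\perp\}\cup V}$ (with $\perp\notin V$), let $O_x$ be operators on a space $\mathcal{H}$ with $O_x^2=I$, and set \[|\psi_x\rangle=\frac{1}{\sqrt{\varepsilon}}\sum_{v\in M_x}\sqrt{\pi_v}\,|v\rangle.\] Define $R=\{(|\perp\rangle+|\psi_x\rangle,\ |\perp\rangle-|\psi_x\rangle,\ O_x)\}_{x\in\mathcal{D}}$ and $R'=\{(\mathbb{1}_\perp-\tfrac{1}{\varepsilon}\pi|_{M_x},\ \mathbb{1}_\perp+\mathbb{1}_{M_x},\ O_x)\}_{x\in\mathcal{D}}$, where $\pi|_{M_x}$ is the vector equal to $\pi$ on $M_x$ and $0$ elsewhere and $\mathbb{1}_S$ is the indicator vector of $S$. Then the sets of feasible solutions of $R$ and $R'$ are identical, and $R'$ is a hyperedge problem.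
   Context: A state-reflection problem $\{(|\sigma_x^+\rangle,|\sigma_x^-\rangle,O_x)\}_{x\in\mathcal{D}}$ consists of orthogonal vectors $|\sigma_x^\pm\rangle$ in a finite-dimensional space $\mathcal{V}$ and operators $O_x$ on $\mathcal{H}$ with $O_x^2=I$; a feasible solution is a finite-dimensional space $\mathcal{W}$ and vectors $|w_x^s\rangle\in\mathcal{H}\otimes\mathcal{W}$ ($s\in\{+,-\}$) with $\langle\sigma_x^s|\sigma_y^t\rangle-st\langle\sigma_x^s|\sigma_y^t\rangle=\langle w_x^s|((I-O_x^\dagger O_y)\otimes I)|w_y^t\rangle$ for all $x,y$ and $s,t$. A hyperedge problem on a finite set $V'$ is a state-reflection problem over $\mathbb{C}^{V'}$ with $|\sigma_x^+\rangle=\delta_x$, $|\sigma_x^-\rangle=U_x$ such that $\sum_{v}(\delta_x)_v=0$ and $U_x$ is constant on the support of $\delta_x$, for every $x$. *)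

(* Defs.v *)
(* Complex scalars: an arbitrary numClosedFieldType C
   (e.g. algC, or R[i] for a real closed field R). *)
From HB Require Import structures.
From mathcomp Require Import all_boot all_order all_algebra.
From mathcomp Require Import mxtens.
Set Implicit Arguments. Unset Strict Implicit. Unset Printing Implicit Defensive.
Import Order.TTheory GRing.Theory Num.Theory.
Local Open Scope ring_scope.

Section Defs.
Variable C : numClosedFieldType.

Definition inner (I : finType) (a b : I -> C) : C :=
  \sum_(i : I) (a i)^* * b i.

Definition adj (m n : nat) (A : 'M[C]_(m, n)) : 'M[C]_(n, m) :=
  map_mx Num.conj (A^T).

Definition sandwich (n : nat) (u : 'cV[C]_n) (A : 'M[C]_n) (v : 'cV[C]_n) : C :=
  (adj u *m A *m v) 0 0.

Definition sgn (s : bool) : C := if s then 1 else -1.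

(* A state-reflection problem over C^I, with H = C^m, indexed by D :
   sig x true = |sigma_x^+>, sig x false = |sigma_x^->, O x = O_x. *)
Definition is_state_reflection (I D : finType) (m : nat)
  (sig : D -> bool -> I -> C) (O : D -> 'M[C]_m) : Prop :=
  (forall x, inner (sig x true) (sig x false) = 0) /\
  (forall x, O x *m O x = 1%:M).

(* feasible solution: W = C^k, and w x s in H (x) W = C^(m*k) *)
Definition feasible (I D : finType) (m : nat)
  (sig : D -> bool -> I -> C) (O : D -> 'M[C]_m)
  (k : nat) (w : D -> bool -> 'cV[C]_(m * k)) : Prop :=
  forall (x y : D) (s t : bool),
    inner (sig x s) (sig y t) - sgn s * sgn t * inner (sig x s) (sig y t)
    = sandwich (w x s) (tensmx (1%:M - adj (O x) *m O y) (1%:M : 'M[C]_k))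
               (w y t).

(* hyperedge problem: sig x true = delta_x, sig x false = U_x *)
Definition is_hyperedge (I D : finType) (m : nat)
  (sig : D -> bool -> I -> C) (O : D -> 'M[C]_m) : Prop :=
  is_state_reflection sig O /\
  (forall x, \sum_(v : I) sig x true v = 0) /\
  (forall x, forall u v : I, sig x true u != 0 -> sig x true v != 0 ->
     sig x false u = sig x false v).

(* vectors in C^({bot} u V), with bot = None *)
Definition ket_bot (V : finType) : option V -> C :=
  fun i => if i is None then 1 else 0.

Definition psi (V : finType) (pi : V -> C) (eps : C) (M : {set V}) : option V -> C :=
  fun i => match i with
           | None => 0
           | Some v => if v \in M then sqrtC (pi v) / sqrtC eps else 0
           end.

Definition sigR (V D : finType) (pi : V -> C) (eps : C) (M : D -> {set V})
  : D -> bool -> option V -> C :=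
  fun x s i => ket_bot i + sgn s * psi pi eps (M x) i.

(* R' : (1_bot - pi|_{M_x} / eps, 1_bot + 1_{M_x}) *)
Definition sigR' (V D : finType) (pi : V -> C) (eps : C) (M : D -> {set V})
  : D -> bool -> option V -> C :=
  fun x s i => match i with
               | None => 1
               | Some v => if v \in M x then
                             (if s then - (pi v / eps) else 1)
                           else 0
               end.
End Defs.

(* Main.v *)
Require Import Defs.
From HB Require Import structures.
From mathcomp Require Import all_boot all_order all_algebra.
From mathcomp Require Import mxtens.
Import Order.TTheory GRing.Theory Num.Theory.
Local Open Scope ring_scope.

Lemma big_opt (R : nmodType) (V : finType) (F : option V -> R) :
  \sum_(i : option V) F i = F None + \sum_(v : V) F (Some v).
Proof.
rewrite (bigD1 None) //=; congr (_ + _).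
rewrite (reindex_omap (@Some V) id) => [|[v|]] //.
by apply: eq_bigl => v; rewrite eqxx.
Qed.

Theorem theorem5p5 (C : numClosedFieldType) (V D : finType) (pi : V -> C)
  (eps : C) (M : D -> {set V}) (m : nat) (O : D -> 'M[C]_m) :
  (forall v, 0 <= pi v) -> \sum_(v : V) pi v = 1 ->
  0 < eps -> eps < 1 ->
  (forall x, \sum_(v in M x) pi v = eps) ->
  (forall x, O x *m O x = 1%:M) ->
  (forall (k : nat) (w : D -> bool -> 'cV[C]_(m * k)),
     feasible (sigR pi eps M) O w <-> feasible (sigR' pi eps M) O w) /\
  is_hyperedge (sigR' pi eps M) O.
Proof.
move=> hpi _ he _ hM hO.
have he0 : eps != 0 by rewrite lt0r_neq0.
have hq v : (pi v / eps)^* = pi v / eps.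
  by rewrite geC0_conj // divr_ge0 // ltW.
have hp v : (sqrtC (pi v) / sqrtC eps)^* = sqrtC (pi v) / sqrtC eps.
  by rewrite geC0_conj // divr_ge0 // sqrtC_ge0 // ltW.
have hpp v : sqrtC (pi v) / sqrtC eps * (sqrtC (pi v) / sqrtC eps) = pi v / eps.
  by rewrite -expr2 exprMn exprVn !sqrtCK.
have key x y s t :
  inner (sigR pi eps M x s) (sigR pi eps M y t)
    - sgn C s * sgn C t * inner (sigR pi eps M x s) (sigR pi eps M y t)
  = inner (sigR' pi eps M x s) (sigR' pi eps M y t)
    - sgn C s * sgn C t * inner (sigR' pi eps M x s) (sigR' pi eps M y t).
  case: s; case: t; rewrite /sgn ?mul1r ?mulrNN ?mul1r ?subrr //.
  - (match goal with |- ?a - _ = ?b - _ => suff -> : a = b by [] end); rewrite /inner; apply: eq_bigr => -[v|] _ /=;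
      rewrite /sigR /ket_bot /psi /=.
    + case: (v \in M x); case: (v \in M y);
        rewrite ?add0r ?mul1r ?mulN1r ?oppr0 ?mulr0 ?mul0r ?rmorph0 ?mulr1 ?mul0r ?mulr0 ?oppr0 //.
      by rewrite /= hp mulrN hpp rmorphN /= hq.
    + rewrite ?mulr0 ?oppr0 ?addr0 /= ?rmorph1 ?mul1r ?mulr1. by [].
  - (match goal with |- ?a - _ = ?b - _ => suff -> : a = b by [] end); rewrite /inner; apply: eq_bigr => -[v|] _ /=;
      rewrite /sigR /ket_bot /psi /=.
    + case: (v \in M x); case: (v \in M y);
        rewrite ?add0r ?mul1r ?mulN1r ?oppr0 ?mulr0 ?mul0r ?rmorph0 ?mulr1 ?rmorph1 ?mul0r ?mulr0 ?oppr0 //.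
      by rewrite mul1r -mulN1r rmorphM /= conjCN1 hp mulN1r mulNr hpp.
    + rewrite ?mulr0 ?oppr0 ?addr0 /= ?rmorph1 ?mul1r ?mulr1. by [].
split.
  by move=> k w; split => H x y s t; rewrite -H ?key.
have hsum x : \sum_(v : V) sigR' pi eps M x true (Some v) = - 1.
  rewrite /= (eq_bigr (fun v => if v \in M x then -(pi v / eps) else 0));
    last by [].
  by rewrite -big_mkcond /= sumrN -mulr_suml hM divff.
split; [split|split].
- move=> x; rewrite /inner big_opt /= rmorph1 mul1r.
  rewrite (eq_bigr (fun v => sigR' pi eps M x true (Some v))) ?hsum ?subrr //.
  move=> v _ /=; case: (v \in M x); rewrite ?mulr1 ?rmorph0 ?mul0r //.
  by rewrite -mulN1r rmorphM /= conjCN1 hq.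
- exact: hO.
- by move=> x; rewrite big_opt hsum /= subrr.
- move=> x.
  have H (u : option V) : sigR' pi eps M x true u != 0 ->
      sigR' pi eps M x false u = 1.
    by case: u => [u|] //=; case: (u \in M x) => //; rewrite eqxx.
  by move=> u v /H -> /H ->.
Qed.
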